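(* Assume $N\ge 2$ and $2\beta T>1$. Run the Exponentially Weighted Forecaster (EWF) policy with parameters \[ \gamma=\frac{1}{2\beta T},\qquad \eta=\sqrt{\frac{\log N}{4\beta^2T\log\left(2\beta TN^3+N+2\right)}}. \] Then for every demand sequence $d_1,\dots,d_T\in\mathcal D$, \[ \mathbb E[\mathcal R(T)]\le 4\beta\sqrt{T\log N\log\left(2\beta TN^3+N+2\right)}+2\beta\sqrt{T\log N}+1 . \]
   Context: Fix integers $T\ge1$, $D\ge 1$ and reals $h,b>0$. Let $\mathcal T=\{1,\dots,T\}$, $\mathcal D=\{0,1,\dots,D\}$, let $\mathcal I\subseteq\mathcal D$ with $|\mathcal I|=N$, let $\beta=D\max\{h,b\}$, and let $c(i,d)=h(i-d)^+ + b(d-i)^+$. Logarithms are natural. For $d\in\mathcal D$, $e_d\in\mathbb R^{D+1}$ is the standard basis vector (coordinates indexed by $\{0,\dots,D\}$) with a $1$ in coordinate $d$. For $i\in\mathcal D$, the signal matrix $\mathbb S_i$ is the $(i+1)\times(D+1)$ $0/1$ matrix with rows indexed by $k\in\{1,\dots,i+1\}$ and columns by $d\in\{0,\dots,D\}$, with $\mathbb S_i(k,d)=1$ iff $\min\{i,d\}=k-1$; and $v_i\in\mathbb R^{i+1}$ is defined by $v_i(k)=hi-(h+b)(k-1)$, $k=1,\dots,i+1$. A demand sequence $d_1,\dots,d_T\in\mathcal D$ is fixed arbitrarily in advance (it does not depend on the policy's decisions). EWF policy with parameters $\eta>0$, $\gamma\in(0,1)$: set $W_i(0)=1$ for all $i\in\mathcal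 I$. For $t=1,\dots,T$: let $W(t-1)=\sum_{i\in\mathcal I}W_i(t-1)$ and $p_i(t)=(1-\gamma)\frac{W_i(t-1)}{W(t-1)}+\frac{\gamma}{N}$; draw $I_t\in\mathcal I$ with $\mathbb P(I_t=i\mid I_1,\dots,I_{t-1})=p_i(t)$; observe the sales $\min\{I_t,d_t\}$; for each $i\in\mathcal I$ compute $\tilde c(i,d_t)=\frac{\mathbb 1\{I_t\ge i\}}{\mathbb P_t(I_t\ge i)}\left(v_i^T\mathbb S_ie_{d_t}+\beta\right)$ with $\mathbb P_t(I_t\ge i)=\sum_{j\in\mathcal I,\,j\ge i}p_j(t)$; and set $W_i(t)=W_i(t-1)e^{-\eta\tilde c(i,d_t)}$. The regret is $\mathcal R(T)=\sum_{t\in\mathcal T}c(I_t,d_t)-\min_{i\in\mathcal I}\sum_{t\in\mathcal T}c(i,d_t)$, and the expectation is over the policy's randomization. *)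

(* Defs.v *)
From Stdlib Require Import Reals List Lia.
Import ListNotations.
Open Scope R_scope.

Fixpoint sumR (l : list R) : R :=
  match l with [] => 0 | x :: l' => x + sumR l' end.

(* minimum of a nonempty list (0 on the empty list, never used) *)
Fixpoint minR (l : list R) : R :=
  match l with
  | [] => 0
  | [x] => x
  | x :: l' => Rmin x (minR l')
  end.

Definition beta (D : nat) (h b : R) : R := INR D * Rmax h b.

(* c(i,d) = h (i-d)^+ + b (d-i)^+ ; nat subtraction is truncated *)
Definition cost (h b : R) (i d : nat) : R := h * INR (i - d) + b * INR (d - i).

Definition vvec (h b : R) (i k : nat) : R := h * INR i - (h + b) * INR (k - 1).

Definition Smat (i k d : nat) : R := if Nat.eqb (Nat.min i d) (k - 1) then 1 else 0.

Definition signal (h b : R) (i d : nat) : R :=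
  sumR (map (fun k => vvec h b i k * Smat i k d) (seq 1 (i + 1))).

Section EWF.
Variables (D : nat) (h b : R) (Iset : list nat) (dem : nat -> nat)
          (eta gamma : R).

Definition Nn : R := INR (length Iset).

Definition Wsum (W : nat -> R) : R := sumR (map W Iset).

Definition prob_arm (W : nat -> R) (i : nat) : R :=
  (1 - gamma) * (W i / Wsum W) + gamma / Nn.

Definition Pge (W : nat -> R) (i : nat) : R :=
  sumR (map (prob_arm W) (filter (fun j => Nat.leb i j) Iset)).

Definition est_loss (W : nat -> R) (It dt i : nat) : R :=
  (if Nat.leb i It then 1 / Pge W i else 0) * (signal h b i dt + beta D h b).

Definition update (W : nat -> R) (It dt : nat) : nat -> R :=
  fun i => W i * exp (- eta * est_loss W It dt i).

(* probability that the policy plays the path s = [I_t; I_{t+1}; ...]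
   given the weight vector W = W(t-1) *)
Fixpoint path_prob (W : nat -> R) (t : nat) (s : list nat) : R :=
  match s with
  | [] => 1
  | a :: s' => prob_arm W a * path_prob (update W a (dem t)) (S t) s'
  end.

Fixpoint path_cost (t : nat) (s : list nat) : R :=
  match s with
  | [] => 0
  | a :: s' => cost h b a (dem t) + path_cost (S t) s'
  end.

Fixpoint paths (n : nat) : list (list nat) :=
  match n with
  | O => [[]]
  | S n' => flat_map (fun a => map (cons a) (paths n')) Iset
  end.

Definition best_cost (T : nat) : R :=
  minR (map (fun i => sumR (map (fun t => cost h b i (dem t)) (seq 1 T))) Iset).

Definition regret (T : nat) (s : list nat) : R := path_cost 1 s - best_cost T.

Definition expected_regret (T : nat) : R :=
  sumR (map (fun s => path_prob (fun _ => 1) 1 s * regret T s) (paths T)).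

End EWF.

(* Main.v *)
Require Import Defs.
From Stdlib Require Import Reals List Lia Lra.
From Coquelicot Require Coquelicot.
Import ListNotations.
Open Scope R_scope.


Module ExpQuad.
Import Coquelicot.Coquelicot.
Lemma exp_quad y : 0 <= y -> exp (- y) <= 1 - y + y ^ 2 / 2.
Proof.
  intros Hy. destruct (Req_dec y 0) as [->|Hy0].
  { rewrite Ropp_0, exp_0. lra. }
  assert (Hlt : 0 < y) by lra.
  destruct (MVT_cor2 (fun y => 1 - y + y ^ 2 / 2 - exp (- y))
                     (fun y => -1 + y + exp (- y)) 0 y Hlt) as [c [Hc Hc2]].
  { intros c _. apply is_derive_Reals. auto_derive; auto. simpl. field. }
  rewrite Ropp_0, exp_0 in Hc.
  assert (0 <= -1 + c + exp (- c)) by (pose proof (exp_ineq1_le (- c)); lra).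
  assert (0 <= (-1 + c + exp (- c)) * (y - 0)) by (apply Rmult_le_pos; lra).
  lra.
Qed.
End ExpQuad.
Definition exp_quad := ExpQuad.exp_quad.


Lemma ln_le_sub1 x : 0 < x -> ln x <= x - 1.
Proof. intros Hx. pose proof (exp_ineq1_le (ln x)). rewrite exp_ln in H; lra. Qed.

Lemma ln_le_mono x y : 0 < x -> x <= y -> ln x <= ln y.
Proof. intros Hx [H|H]. left; apply ln_increasing; lra. subst; lra. Qed.

Lemma sumR_app l1 l2 : sumR (l1 ++ l2) = sumR l1 + sumR l2.
Proof. induction l1; simpl; lra. Qed.

Lemma sumR_add {A} (f g : A -> R) l :
  sumR (map (fun x => f x + g x) l) = sumR (map f l) + sumR (map g l).
Proof. induction l; simpl; lra. Qed.

Lemma sumR_scal {A} (c : R) (f : A -> R) l :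
  sumR (map (fun x => c * f x) l) = c * sumR (map f l).
Proof. induction l; simpl; lra. Qed.

Lemma sumR_const {A} (c : R) (l : list A) :
  sumR (map (fun _ => c) l) = INR (length l) * c.
Proof. induction l; simpl length; [simpl; lra|rewrite S_INR; simpl; lra]. Qed.

Lemma sumR_ext {A} (f g : A -> R) l :
  (forall x, In x l -> f x = g x) -> sumR (map f l) = sumR (map g l).
Proof. intros H; f_equal; apply map_ext_in; auto. Qed.

Lemma sumR_le {A} (f g : A -> R) l :
  (forall x, In x l -> f x <= g x) -> sumR (map f l) <= sumR (map g l).
Proof. induction l; simpl; intros H; [lra|]. pose proof (H a (or_introl eq_refl)).
  assert (sumR (map f l) <= sumR (map g l)) by (apply IHl; auto). lra. Qed.

Lemma sumR_nonneg {A} (f : A -> R) l :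
  (forall x, In x l -> 0 <= f x) -> 0 <= sumR (map f l).
Proof. intros H. replace 0 with (sumR (map (fun _ : A => 0) l)).
  apply sumR_le; auto. rewrite sumR_const; lra. Qed.

Lemma sumR_ge_elem {A} (f : A -> R) l y :
  (forall x, In x l -> 0 <= f x) -> In y l -> f y <= sumR (map f l).
Proof. induction l; simpl; intros H Hy; [contradiction|].
  destruct Hy as [->|Hy].
  - assert (0 <= sumR (map f l)) by (apply sumR_nonneg; auto). lra.
  - pose proof (H a (or_introl eq_refl)). assert (f y <= sumR (map f l)) by (apply IHl; auto). lra.
Qed.

Lemma sumR_filter {A} (f : A -> R) (P : A -> bool) l :
  sumR (map f (filter P l)) = sumR (map (fun x => if P x then f x else 0) l).
Proof. induction l; simpl; [lra|]. destruct (P a); simpl; lra. Qed.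

Lemma sumR_flat_map {A B} (f : B -> R) (F : A -> list B) l :
  sumR (map f (flat_map F l)) = sumR (map (fun x => sumR (map f (F x))) l).
Proof. induction l; simpl; [lra|]. rewrite map_app, sumR_app; lra. Qed.

Lemma sumR_swap {A B} (F : A -> B -> R) l1 l2 :
  sumR (map (fun a => sumR (map (fun i => F a i) l2)) l1) =
  sumR (map (fun i => sumR (map (fun a => F a i) l1)) l2).
Proof. induction l1; simpl.
  - rewrite sumR_const; lra.
  - rewrite IHl1. rewrite <- sumR_add. reflexivity. Qed.

Lemma sumR_remove (f : nat -> R) l m :
  NoDup l -> In m l -> sumR (map f l) = f m + sumR (map f (remove Nat.eq_dec m l)).
Proof. induction l as [|x l IH]; simpl; intros Hnd Hm; [contradiction|].
  inversion Hnd; subst. destruct (Nat.eq_dec m x) as [->|Hne].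
  - rewrite notin_remove; auto.
  - destruct Hm as [->|Hm]; [congruence|]. simpl. rewrite (IH H2 Hm). lra.
Qed.

Lemma NoDup_remove' l m : NoDup l -> NoDup (remove Nat.eq_dec m l).
Proof. induction l as [|x l IH]; simpl; intros Hnd; auto.
  inversion Hnd; subst. destruct (Nat.eq_dec m x); auto.
  constructor; auto. intros Hin. apply in_remove in Hin. tauto. Qed.

Lemma min_exists (l : list nat) : l <> [] -> exists m, In m l /\ forall x, In x l -> (m <= x)%nat.
Proof. induction l as [|x l IH]; intros H; [congruence|].
  destruct l as [|y l'].
  - exists x; simpl; split; auto. intros z [->|[]]; lia.
  - destruct IH as [m [Hm Hmin]]; [discriminate|].
    destruct (Compare_dec.le_lt_dec x m).
    + exists x. split; [left; auto|]. intros z [->|Hz]; [lia|]. specialize (Hmin z Hz); lia.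
    + exists m. split; [right; auto|]. intros z [->|Hz]; [lia|]. auto.
Qed.

Lemma minR_in l : l <> [] -> In (minR l) l.
Proof. induction l as [|x l IH]; intros H; [congruence|].
  destruct l as [|y l']; [simpl; auto|].
  change (minR (x :: y :: l')) with (Rmin x (minR (y :: l'))).
  unfold Rmin; destruct (Rle_dec x (minR (y :: l'))); [left; auto|right; apply IH; discriminate].
Qed.

Lemma Rdiv_le_0_compat a b : 0 <= a -> 0 < b -> 0 <= a / b.
Proof. intros. unfold Rdiv. apply Rmult_le_pos; [lra|left; apply Rinv_0_lt_compat; lra]. Qed.


Definition tailR (l : list nat) (f : nat -> R) (i : nat) :=
  sumR (map (fun j => if Nat.leb i j then f j else 0) l).

Lemma logsum n : forall l f c, (length l <= n)%nat -> NoDup l -> l <> [] -> 0 < c ->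
  (forall x, In x l -> c <= f x) ->
  sumR (map (fun i => f i / tailR l f i) l) <= 1 + ln (sumR (map f l)) - ln c.
Proof.
  induction n as [|n IH]; intros l f c Hlen Hnd Hne Hc Hf.
  { destruct l; [congruence|simpl in Hlen; lia]. }
  destruct (min_exists l Hne) as [m [Hm Hmin]].
  set (l' := remove Nat.eq_dec m l).
  assert (Hl'len : (length l' <= n)%nat).
  { pose proof (remove_length_lt Nat.eq_dec l m Hm). unfold l'; lia. }
  assert (Hnd' : NoDup l') by (apply NoDup_remove'; auto).
  assert (Hinl' : forall x, In x l' -> In x l /\ x <> m) by (intros x Hx; apply in_remove in Hx; auto).
  assert (Hfpos : forall x, In x l -> 0 <= f x) by (intros x Hx; specialize (Hf x Hx); lra).
  set (S := sumR (map f l)). set (S' := sumR (map f l')).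
  assert (HS : S = f m + S') by (apply sumR_remove; auto).
  assert (Htm : tailR l f m = S).
  { unfold tailR, S. apply sumR_ext. intros x Hx. specialize (Hmin x Hx).
    destruct (Nat.leb_spec m x); [reflexivity|lia]. }
  assert (Hti : forall i, In i l' -> tailR l f i = tailR l' f i).
  { intros i Hi. destruct (Hinl' i Hi) as [Hil Hne'].
    unfold tailR. rewrite (sumR_remove _ l m Hnd Hm).
    specialize (Hmin i Hil). destruct (Nat.leb_spec i m); [lia|]. fold l'. lra. }
  rewrite (sumR_remove _ l m Hnd Hm). fold l'.
  rewrite (sumR_ext _ (fun i => f i / tailR l' f i) l') by (intros x Hx; rewrite Hti; auto).
  rewrite Htm. fold S.
  assert (Hfm : c <= f m) by auto.
  assert (HS'0 : 0 <= S') by (apply sumR_nonneg; intros x Hx; apply Hfpos, Hinl', Hx).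
  destruct (list_eq_dec Nat.eq_dec l' []) as [E|Hne'].
  - rewrite E. simpl. assert (HS'z : S' = 0) by (unfold S'; rewrite E; reflexivity).
    assert (HSm : S = f m) by lra. rewrite HSm.
    assert (f m / f m = 1) by (field; lra).
    assert (ln c <= ln (f m)) by (apply ln_le_mono; lra). lra.
  - assert (Hf' : forall x, In x l' -> c <= f x) by (intros x Hx; apply Hf, Hinl', Hx).
    pose proof (IH l' f c Hl'len Hnd' Hne' Hc Hf') as IH'. fold S' in IH'.
    assert (HS'c : c <= S').
    { assert (Hy : exists y, In y l').
      { destruct l' as [|y l'']; [congruence|]. exists y; left; auto. }
      destruct Hy as [y Hy].
      assert (f y <= S').
      { unfold S'. apply sumR_ge_elem; [|exact Hy]. intros x Hx. apply Hfpos, Hinl'. exact Hx. }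
      pose proof (Hf' y Hy). lra. }
    assert (Hk : f m / S <= ln S - ln S').
    { pose proof (ln_le_sub1 (S' / S)).
      assert (0 < S' / S) by (apply Rdiv_lt_0_compat; lra).
      rewrite Rdiv_def, ln_mult, ln_Rinv in H by (try apply Rinv_0_lt_compat; lra).
      assert (f m / S = 1 - S' / S) by (rewrite HS; field; lra). lra. }
    lra.
Qed.


Lemma smat_zero h b i d l :
  (forall k, In k l -> Nat.min i d <> (k - 1)%nat) ->
  sumR (map (fun k => vvec h b i k * Smat i k d) l) = 0.
Proof.
  intros H. replace 0 with (sumR (map (fun _ : nat => 0) l)) by (rewrite sumR_const; lra).
  apply sumR_ext. intros k Hk. unfold Smat.
  destruct (Nat.eqb_spec (Nat.min i d) (k - 1)); [exfalso; apply (H k Hk); auto|lra].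
Qed.

Lemma signal_eq h b i d : signal h b i d = cost h b i d - b * INR d.
Proof.
  unfold signal. set (m := Nat.min i d).
  replace (i + 1)%nat with (m + (1 + (i - m)))%nat by (unfold m; lia).
  rewrite seq_app, map_app, sumR_app, seq_app, map_app, sumR_app.
  rewrite smat_zero.
  2:{ intros k Hk. apply in_seq in Hk. lia. }
  rewrite (smat_zero _ _ _ _ (seq (1 + m + 1) (i - m))).
  2:{ intros k Hk. apply in_seq in Hk. fold m. lia. }
  simpl. unfold Smat. fold m. replace (S m - 1)%nat with m by lia.
  rewrite Nat.eqb_refl. unfold vvec, cost. replace (S m - 1)%nat with m by lia.
  unfold m. destruct (Nat.le_gt_cases i d).
  - rewrite Nat.min_l by lia. replace (i - d)%nat with 0%nat by lia.
    rewrite minus_INR by lia. simpl. ring.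
  - rewrite Nat.min_r by lia. replace (d - i)%nat with 0%nat by lia.
    rewrite minus_INR by lia. simpl. ring.
Qed.

Lemma beta_pos D h b : (1 <= D)%nat -> 0 < h -> 0 < beta D h b.
Proof. intros HD Hh. unfold beta. apply Rmult_lt_0_compat.
  apply lt_0_INR; lia. pose proof (Rmax_l h b); lra. Qed.

Lemma cost_bounds D h b a d : 0 < h -> 0 < b -> (a <= D)%nat -> (d <= D)%nat ->
  0 <= cost h b a d <= beta D h b.
Proof.
  intros Hh Hb Ha Hd. unfold cost, beta.
  pose proof (Rmax_l h b). pose proof (Rmax_r h b).
  pose proof (pos_INR (a - d)). pose proof (pos_INR (d - a)).
  pose proof (pos_INR D).
  destruct (Nat.le_gt_cases a d).
  - replace (a - d)%nat with 0%nat by lia. simpl.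
    assert (INR (d - a) <= INR D) by (apply le_INR; lia).
    split; [nra|]. nra.
  - replace (d - a)%nat with 0%nat by lia. simpl.
    assert (INR (a - d) <= INR D) by (apply le_INR; lia).
    split; [nra|]. nra.
Qed.

Definition lo D h b i d := signal h b i d + beta D h b.

Lemma lo_bounds D h b a d : 0 < h -> 0 < b -> (a <= D)%nat -> (d <= D)%nat ->
  0 <= lo D h b a d <= 2 * beta D h b.
Proof.
  intros Hh Hb Ha Hd. unfold lo. rewrite signal_eq.
  pose proof (cost_bounds D h b a d Hh Hb Ha Hd).
  assert (b * INR d <= beta D h b).
  { unfold beta. pose proof (Rmax_r h b). pose proof (pos_INR d).
    assert (INR d <= INR D) by (apply le_INR; lia). nra. }
  pose proof (pos_INR d). nra.
Qed.

Lemma lo_diff D h b a i d : cost h b a d - cost h b i d = lo D h b a d - lo D h b i d.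
Proof. unfold lo. rewrite !signal_eq. ring. Qed.


Definition Wpos (W : nat -> R) := forall i, 0 < W i.

Definition Ex D h b Iset dem eta gamma W t n (f : list nat -> R) :=
  sumR (map (fun s => path_prob D h b Iset dem eta gamma W t s * f s) (paths Iset n)).

Fixpoint pathg (g : nat -> nat -> R) (t : nat) (s : list nat) : R :=
  match s with [] => 0 | a :: s' => g t a + pathg g (S t) s' end.

Lemma Wsum_pos Iset W : Wpos W -> Iset <> [] -> 0 < Wsum Iset W.
Proof. intros HW Hne. destruct Iset as [|x l]; [congruence|].
  unfold Wsum. simpl. pose proof (HW x).
  assert (0 <= sumR (map W l)) by (apply sumR_nonneg; intros; left; apply HW). lra. Qed.

Lemma Nn_pos Iset : Iset <> [] -> 0 < Nn Iset.
Proof. intros Hne. unfold Nn. destruct Iset; [congruence|]. apply lt_0_INR; simpl; lia. Qed.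

Lemma prob_lb Iset gamma W a : Wpos W -> Iset <> [] -> 0 <= gamma <= 1 ->
  gamma / Nn Iset <= prob_arm Iset gamma W a.
Proof. intros HW Hne Hg. unfold prob_arm. pose proof (Wsum_pos Iset W HW Hne).
  assert (0 <= W a / Wsum Iset W) by (apply Rdiv_le_0_compat; [left; apply HW|lra]).
  assert (0 <= (1 - gamma) * (W a / Wsum Iset W)) by (apply Rmult_le_pos; lra). lra. Qed.

Lemma prob_nonneg Iset gamma W a : Wpos W -> Iset <> [] -> 0 <= gamma <= 1 ->
  0 <= prob_arm Iset gamma W a.
Proof. intros. pose proof (prob_lb Iset gamma W a H H0 H1).
  assert (0 <= gamma / Nn Iset) by (apply Rdiv_le_0_compat; [lra|apply Nn_pos; auto]). lra. Qed.

Lemma prob_sum Iset gamma W : Wpos W -> Iset <> [] ->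
  sumR (map (prob_arm Iset gamma W) Iset) = 1.
Proof. intros HW Hne. unfold prob_arm.
  rewrite (sumR_add (fun x => (1 - gamma) * (W x / Wsum Iset W)) (fun _ => gamma / Nn Iset)).
  rewrite sumR_const, sumR_scal.
  rewrite (sumR_ext _ (fun x => / Wsum Iset W * W x)) by (intros; unfold Rdiv; ring).
  rewrite sumR_scal. fold (Wsum Iset W). pose proof (Wsum_pos Iset W HW Hne).
  pose proof (Nn_pos Iset Hne). unfold Nn in *. field. lra. Qed.

Lemma update_pos D h b Iset eta gamma W a d : Wpos W -> Wpos (update D h b Iset eta gamma W a d).
Proof. intros HW i. unfold update. apply Rmult_lt_0_compat; [apply HW|apply exp_pos]. Qed.

Lemma Ex_S D h b Iset dem eta gamma W t n f :
  Ex D h b Iset dem eta gamma W t (S n) f =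
  sumR (map (fun a => prob_arm Iset gamma W a *
     Ex D h b Iset dem eta gamma (update D h b Iset eta gamma W a (dem t)) (S t) n (fun s => f (a :: s))) Iset).
Proof. unfold Ex. simpl paths. rewrite sumR_flat_map. apply sumR_ext. intros a _.
  rewrite map_map. simpl. rewrite <- sumR_scal. apply sumR_ext. intros s _. ring. Qed.

Lemma Ex_one D h b Iset dem eta gamma n : forall W t, Wpos W -> Iset <> [] ->
  Ex D h b Iset dem eta gamma W t n (fun _ => 1) = 1.
Proof. induction n as [|n IH]; intros W t HW Hne.
  - unfold Ex. simpl. ring.
  - rewrite Ex_S. rewrite (sumR_ext _ (prob_arm Iset gamma W)).
    + apply prob_sum; auto.
    + intros a _. rewrite IH; [ring|apply update_pos; auto|auto]. Qed.

Lemma Ex_lin D h b Iset dem eta gamma W t n c f :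
  Ex D h b Iset dem eta gamma W t n (fun s => c + f s) =
  c * Ex D h b Iset dem eta gamma W t n (fun _ => 1) + Ex D h b Iset dem eta gamma W t n f.
Proof. unfold Ex. rewrite <- sumR_scal, <- sumR_add. apply sumR_ext. intros; ring. Qed.

Lemma Ex_generic D h b Iset dem eta gamma (g : nat -> nat -> R) (Phi : (nat -> R) -> R) C t0 n0 :
  Iset <> [] -> 0 <= gamma <= 1 ->
  (forall W, Wpos W -> 0 <= Phi W) ->
  (forall W t, Wpos W -> (t0 <= t < t0 + n0)%nat ->
     sumR (map (fun a => prob_arm Iset gamma W a *
        (g t a + Phi (update D h b Iset eta gamma W a (dem t)))) Iset) <= C + Phi W) ->
  forall n t W, Wpos W -> (t0 <= t)%nat -> (t + n <= t0 + n0)%nat ->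
    Ex D h b Iset dem eta gamma W t n (pathg g t) <= INR n * C + Phi W.
Proof.
  intros Hne Hg H0 Hstep n. induction n as [|n IH]; intros t W HW Ht Htn.
  - unfold Ex. simpl. specialize (H0 W HW). lra.
  - rewrite Ex_S. simpl pathg.
    eapply Rle_trans.
    { apply sumR_le. intros a Ha.
      rewrite Ex_lin, Ex_one by (auto; apply update_pos; auto).
      apply Rmult_le_compat_l; [apply prob_nonneg; auto|].
      apply Rplus_le_compat_l.
      apply (IH (S t) (update D h b Iset eta gamma W a (dem t))); [apply update_pos; auto|lia|lia]. }
    rewrite (sumR_ext _ (fun a => prob_arm Iset gamma W a * (g t a + Phi (update D h b Iset eta gamma W a (dem t))) + INR n * C * prob_arm Iset gamma W a))
      by (intros; ring).
    rewrite sumR_add, sumR_scal, prob_sum by auto.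
    specialize (Hstep W t HW ltac:(lia)). rewrite S_INR. lra.
Qed.


Lemma hedge Iset W (e : nat -> R) eta : Wpos W -> Iset <> [] -> 0 <= eta ->
  (forall i, In i Iset -> 0 <= e i) ->
  ln (sumR (map (fun i => W i * exp (- eta * e i)) Iset)) - ln (Wsum Iset W) <=
  sumR (map (fun i => W i / Wsum Iset W * (- eta * e i + eta ^ 2 * e i ^ 2 / 2)) Iset).
Proof.
  intros HW Hne Heta He.
  set (S := Wsum Iset W). assert (HS : 0 < S) by (apply Wsum_pos; auto).
  set (S' := sumR (map (fun i => W i * exp (- eta * e i)) Iset)).
  assert (HS' : 0 < S').
  { unfold S'. change (0 < Wsum Iset (fun i => W i * exp (- eta * e i))).
    apply Wsum_pos; auto. intros i. apply Rmult_lt_0_compat; [apply HW|apply exp_pos]. }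
  assert (Hl : ln S' - ln S = ln (S' / S)).
  { unfold Rdiv. rewrite ln_mult, ln_Rinv; try lra. apply Rinv_0_lt_compat; lra. }
  rewrite Hl. eapply Rle_trans. apply ln_le_sub1. apply Rdiv_lt_0_compat; lra.
  assert (Hq1 : sumR (map (fun i => W i / S) Iset) = 1).
  { rewrite (sumR_ext _ (fun i => / S * W i)) by (intros; unfold Rdiv; ring).
    rewrite sumR_scal. fold (Wsum Iset W). fold S. field. lra. }
  assert (S' / S <= sumR (map (fun i => W i / S * (1 + (- eta * e i + eta ^ 2 * e i ^ 2 / 2))) Iset)).
  { unfold S'. rewrite (sumR_ext (fun i => W i * exp (- eta * e i)) (fun i => S * (W i / S * exp (- eta * e i))))
      by (intros; field; lra).
    rewrite sumR_scal. replace (S * sumR (map (fun i => W i / S * exp (- eta * e i)) Iset) / S)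
      with (sumR (map (fun i => W i / S * exp (- eta * e i)) Iset)) by (field; lra).
    apply sumR_le. intros i Hi. apply Rmult_le_compat_l.
    - apply Rdiv_le_0_compat; [left; apply HW|lra].
    - specialize (He i Hi). replace (- eta * e i) with (- (eta * e i)) by ring.
      pose proof (exp_quad (eta * e i) ltac:(apply Rmult_le_pos; lra)). lra. }
  rewrite (sumR_ext _ (fun i => W i / S + W i / S * (- eta * e i + eta ^ 2 * e i ^ 2 / 2))) in H
    by (intros; ring).
  rewrite sumR_add, Hq1 in H. lra.
Qed.

Lemma Pge_tail Iset gamma W i : Pge Iset gamma W i = tailR Iset (prob_arm Iset gamma W) i.
Proof. unfold Pge, tailR. apply sumR_filter. Qed.

Lemma Pge_ge Iset gamma W i : Wpos W -> Iset <> [] -> 0 <= gamma <= 1 -> In i Iset ->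
  prob_arm Iset gamma W i <= Pge Iset gamma W i.
Proof. intros HW Hne Hg Hi. rewrite Pge_tail. unfold tailR.
  pose proof (sumR_ge_elem (fun j => if Nat.leb i j then prob_arm Iset gamma W j else 0) Iset i) as H.
  simpl in H. rewrite Nat.leb_refl in H. apply H; auto.
  intros x _. destruct (Nat.leb i x); [apply prob_nonneg; auto|lra]. Qed.

Lemma Pge_pos Iset gamma W i : Wpos W -> Iset <> [] -> 0 < gamma <= 1 -> In i Iset ->
  0 < Pge Iset gamma W i.
Proof. intros HW Hne Hg Hi. pose proof (Pge_ge Iset gamma W i HW Hne ltac:(lra) Hi).
  pose proof (prob_lb Iset gamma W i HW Hne ltac:(lra)).
  assert (0 < gamma / Nn Iset) by (apply Rdiv_lt_0_compat; [lra|apply Nn_pos; auto]). lra. Qed.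

Lemma est_mean D h b Iset gamma W d i : Wpos W -> Iset <> [] -> 0 < gamma <= 1 -> In i Iset ->
  sumR (map (fun a => prob_arm Iset gamma W a * est_loss D h b Iset gamma W a d i) Iset)
  = lo D h b i d.
Proof.
  intros HW Hne Hg Hi. pose proof (Pge_pos Iset gamma W i HW Hne Hg Hi) as HP.
  unfold est_loss. fold (lo D h b i d).
  rewrite (sumR_ext _ (fun a => (lo D h b i d / Pge Iset gamma W i) *
        (if Nat.leb i a then prob_arm Iset gamma W a else 0))).
  + rewrite sumR_scal, <- sumR_filter. change (sumR (map _ (filter _ Iset))) with (Pge Iset gamma W i). field; lra.
  + intros a _. destruct (Nat.leb i a); field; lra.
Qed.

Lemma est_sq D h b Iset gamma W d i : Wpos W -> Iset <> [] -> 0 < gamma <= 1 -> In i Iset ->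
  sumR (map (fun a => prob_arm Iset gamma W a * est_loss D h b Iset gamma W a d i ^ 2) Iset)
  = lo D h b i d ^ 2 / Pge Iset gamma W i.
Proof.
  intros HW Hne Hg Hi. pose proof (Pge_pos Iset gamma W i HW Hne Hg Hi) as HP.
  unfold est_loss. fold (lo D h b i d).
  rewrite (sumR_ext _ (fun a => (lo D h b i d ^ 2 / Pge Iset gamma W i ^ 2) *
        (if Nat.leb i a then prob_arm Iset gamma W a else 0))).
  + rewrite sumR_scal, <- sumR_filter. change (sumR (map _ (filter _ Iset))) with (Pge Iset gamma W i). field; lra.
  + intros a _. destruct (Nat.leb i a); field; lra.
Qed.


Lemma step D h b Iset eta gamma W d istar :
  (1 <= D)%nat -> 0 < h -> 0 < b -> NoDup Iset -> Iset <> [] -> (forall i, In i Iset -> (i <= D)%nat) ->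
  (d <= D)%nat -> 0 < gamma <= 1/2 -> 0 < eta -> In istar Iset -> Wpos W ->
  sumR (map (fun a => prob_arm Iset gamma W a *
     ((cost h b a d - cost h b istar d) +
      (ln (Wsum Iset (update D h b Iset eta gamma W a d)) -
       ln (update D h b Iset eta gamma W a d istar)) / eta)) Iset)
  <= (2 * gamma * beta D h b + 4 * eta * beta D h b ^ 2 * (1 - ln (gamma / Nn Iset)))
     + (ln (Wsum Iset W) - ln (W istar)) / eta.
Proof.
  intros HD Hh Hb Hnd Hne HID Hd Hg Heta Hist HW.
  set (p := prob_arm Iset gamma W).
  set (e := fun a i => est_loss D h b Iset gamma W a d i).
  set (S := Wsum Iset W). assert (HS : 0 < S) by (apply Wsum_pos; auto).
  set (q := fun i => W i / S).
  set (l := fun i => lo D h b i d).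
  set (P := Pge Iset gamma W).
  set (bt := beta D h b).
  assert (Hbt : 0 < bt) by (apply beta_pos; auto).
  assert (Hl : forall i, In i Iset -> 0 <= l i <= 2 * bt) by (intros; apply lo_bounds; auto).
  assert (HP : forall i, In i Iset -> 0 < P i) by (intros; apply Pge_pos; auto; lra).
  assert (He : forall a i, In i Iset -> 0 <= e a i).
  { intros a i Hi. unfold e, est_loss. fold (l i). fold P. destruct (Nat.leb i a).
    - apply Rmult_le_pos; [|apply Hl; auto]. specialize (HP i Hi). apply Rdiv_le_0_compat; lra.
    - lra. }
  assert (Hp0 : forall a, 0 <= p a) by (intros; apply prob_nonneg; auto; lra).
  set (X := fun a => sumR (map (fun i => q i * (- e a i + eta * e a i ^ 2 / 2)) Iset)).
  assert (H1 : forall a, (ln (Wsum Iset (update D h b Iset eta gamma W a d)) -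
       ln (update D h b Iset eta gamma W a d istar)) / eta <=
       (ln S - ln (W istar)) / eta + X a + e a istar).
  { intros a. pose proof (hedge Iset W (e a) eta HW Hne ltac:(lra) (He a)) as Hh1.
    fold S in Hh1. fold q in Hh1.
    change (Wsum Iset (update D h b Iset eta gamma W a d)) with
       (sumR (map (fun i => W i * exp (- eta * e a i)) Iset)).
    unfold update. fold (e a istar). rewrite ln_mult, ln_exp by (auto; apply exp_pos).
    rewrite (sumR_ext (fun i => W i / S * (- eta * e a i + eta ^ 2 * e a i ^ 2 / 2))
      (fun i => eta * (q i * (- e a i + eta * e a i ^ 2 / 2)))) in Hh1
      by (intros; unfold q; field; lra).
    rewrite sumR_scal in Hh1. fold (X a) in Hh1.
    apply (Rmult_le_reg_l eta); auto.
    replace (eta * ((ln (sumR (map (fun i => W i * exp (- eta * e a i)) Iset)) -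
      (ln (W istar) + - eta * e a istar)) / eta))
      with (ln (sumR (map (fun i => W i * exp (- eta * e a i)) Iset)) - ln S + (ln S - ln (W istar)) + eta * e a istar)
      by (field; lra).
    replace (eta * ((ln S - ln (W istar)) / eta + X a + e a istar)) with
      ((ln S - ln (W istar)) + eta * X a + eta * e a istar) by (field; lra).
    lra. }
  eapply Rle_trans.
  { apply sumR_le. intros a Ha. apply Rmult_le_compat_l; [apply Hp0|].
    apply Rplus_le_compat_l. apply H1. }
  set (Phi := (ln S - ln (W istar)) / eta).
  rewrite (sumR_ext _ (fun a => (p a * l a + (- l istar) * p a) + (Phi * p a + (p a * X a + p a * e a istar))))
    by (intros a _; rewrite (lo_diff D h b a istar d); fold (l a) (l istar); ring).
  rewrite !sumR_add, !sumR_scal. assert (Hps : sumR (map p Iset) = 1) by (apply prob_sum; auto). rewrite Hps.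
  assert (Hm : sumR (map (fun a => p a * e a istar) Iset) = l istar) by (apply est_mean; auto; lra).
  rewrite Hm.
  assert (HX : sumR (map (fun a => p a * X a) Iset) =
     sumR (map (fun i => q i * (- l i + eta / 2 * (l i ^ 2 / P i))) Iset)).
  { unfold X. rewrite (sumR_ext _ (fun a => sumR (map (fun i => p a * (q i * (- e a i + eta * e a i ^ 2 / 2))) Iset)))
      by (intros; rewrite <- sumR_scal; reflexivity).
    rewrite sumR_swap. apply sumR_ext. intros i Hi.
    rewrite (sumR_ext (fun a => p a * (q i * (- e a i + eta * e a i ^ 2 / 2)))
       (fun a => (- q i) * (p a * e a i) + (q i * eta / 2) * (p a * e a i ^ 2))).
    2:{ intros. field. }
    rewrite sumR_add, !sumR_scal. unfold p, e, P.
    rewrite est_mean, est_sq by (auto; lra). fold (l i). field. apply Rgt_not_eq, HP; auto. }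
  rewrite HX.
  assert (Hpl : sumR (map (fun a => p a * l a) Iset) - sumR (map (fun i => q i * l i) Iset) <= 2 * gamma * bt).
  { unfold p, prob_arm. fold S.
    rewrite (sumR_ext _ (fun a => (1 - gamma) * (q a * l a) + gamma / Nn Iset * l a)) by (intros; unfold q; ring).
    rewrite sumR_add, !sumR_scal.
    assert (0 <= sumR (map (fun i => q i * l i) Iset)).
    { apply sumR_nonneg. intros i Hi. apply Rmult_le_pos; [apply Rdiv_le_0_compat; [left; apply HW|lra]|apply Hl; auto]. }
    assert (sumR (map l Iset) <= sumR (map (fun _ => 2 * bt) Iset)) by (apply sumR_le; intros; apply Hl; auto).
    rewrite sumR_const in H0. fold (Nn Iset) in H0. pose proof (Nn_pos Iset Hne).
    assert (Hg3 : gamma / Nn Iset * sumR (map l Iset) <= gamma / Nn Iset * (Nn Iset * (2 * bt))).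
    { apply Rmult_le_compat_l; [apply Rdiv_le_0_compat; lra|lra]. }
    replace (gamma / Nn Iset * (Nn Iset * (2 * bt))) with (2 * gamma * bt) in Hg3 by (field; lra).
    assert (0 <= gamma * sumR (map (fun i => q i * l i) Iset)) by (apply Rmult_le_pos; lra).
    lra. }
  assert (Hsq : sumR (map (fun i => q i * (l i ^ 2 / P i)) Iset) <= 8 * bt ^ 2 * (1 - ln (gamma / Nn Iset))).
  { eapply Rle_trans.
    { apply (sumR_le _ (fun i => (8 * bt ^ 2) * (p i / P i))). intros i Hi.
      specialize (HP i Hi). specialize (Hl i Hi).
      assert (Hqp : q i <= 2 * p i).
      { unfold p, prob_arm. fold S. fold (q i).
        assert (0 <= gamma / Nn Iset) by (apply Rdiv_le_0_compat; [lra|apply Nn_pos; auto]).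
        assert (0 <= q i) by (apply Rdiv_le_0_compat; [left; apply HW|lra]). nra. }
      assert (0 <= q i) by (apply Rdiv_le_0_compat; [left; apply HW|lra]).
      assert (l i ^ 2 <= 4 * bt ^ 2) by nra.
      unfold Rdiv. assert (0 < / P i) by (apply Rinv_0_lt_compat; lra).
      assert (0 <= l i ^ 2) by nra.
      assert (q i * l i ^ 2 <= 2 * p i * (4 * bt ^ 2)).
      { apply Rmult_le_compat; try lra. }
      nra. }
    rewrite sumR_scal. apply Rmult_le_compat_l; [nra|].
    unfold P. rewrite (sumR_ext _ (fun i => p i / tailR Iset p i)) by (intros; unfold p; rewrite Pge_tail; reflexivity).
    eapply Rle_trans.
    { apply (logsum (length Iset) Iset p (gamma / Nn Iset)); auto.
      apply Rdiv_lt_0_compat; [lra|apply Nn_pos; auto].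
      intros x _. apply prob_lb; auto; lra. }
    unfold p. rewrite prob_sum, ln_1 by auto. lra. }
  rewrite (sumR_ext (fun i => q i * (- l i + eta / 2 * (l i ^ 2 / P i)))
     (fun i => (-1) * (q i * l i) + eta / 2 * (q i * (l i ^ 2 / P i)))) by (intros; ring).
  rewrite sumR_add, !sumR_scal.
  assert (eta / 2 * sumR (map (fun i => q i * (l i ^ 2 / P i)) Iset) <= eta / 2 * (8 * bt ^ 2 * (1 - ln (gamma / Nn Iset)))).
  { apply Rmult_le_compat_l; lra. }
  lra.
Qed.


Lemma pathcost_eq h b dem istar s : forall t,
  path_cost h b dem t s - sumR (map (fun t => cost h b istar (dem t)) (seq t (length s))) =
  pathg (fun t a => cost h b a (dem t) - cost h b istar (dem t)) t s.
Proof. induction s as [|a s IH]; intros t; simpl; [lra|]. rewrite <- IH. lra. Qed.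

Lemma paths_len Iset n : forall s, In s (paths Iset n) -> length s = n.
Proof. induction n as [|n IH]; simpl; intros s Hs.
  - destruct Hs as [<-|[]]; auto.
  - apply in_flat_map in Hs. destruct Hs as [a [_ Hs]]. apply in_map_iff in Hs.
    destruct Hs as [s' [<- Hs']]. simpl. rewrite (IH s' Hs'). auto. Qed.

Lemma final_alg (T bt lnN L eta gamma K : R) :
  1 <= T -> 0 < bt -> 0 < lnN -> 1 <= L -> gamma = 1 / (2 * bt * T) ->
  eta = sqrt (lnN / (4 * bt ^ 2 * T * L)) -> K <= 1 + L ->
  T * (2 * gamma * bt + 4 * eta * bt ^ 2 * K) + lnN / eta <=
  4 * bt * sqrt (T * lnN * L) + 2 * bt * sqrt (T * lnN) + 1.
Proof.
  intros HT Hbt HlnN HL Hg Heta HK.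
  set (u := sqrt (T * lnN)). set (v := sqrt L).
  assert (Hu : 0 < u) by (apply sqrt_lt_R0; nra).
  assert (Hv : 1 <= v).
  { unfold v. rewrite <- sqrt_1. apply sqrt_le_1; lra. }
  assert (Huu : u * u = T * lnN) by (apply sqrt_sqrt; nra).
  assert (Hvv : v * v = L) by (apply sqrt_sqrt; lra).
  assert (Heta' : eta = u / (2 * bt * T * v)).
  { rewrite Heta. apply sqrt_lem_1.
    - apply Rdiv_le_0_compat; [lra|]. repeat apply Rmult_lt_0_compat; try lra; nra.
    - apply Rdiv_le_0_compat; [lra|]. repeat apply Rmult_lt_0_compat; lra.
    - rewrite <- Hvv. replace lnN with (u * u / T) by (rewrite Huu; field; lra). field. repeat split; lra. }
  assert (Hsq : sqrt (T * lnN * L) = u * v) by (apply sqrt_mult; nra).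
  rewrite Hsq. fold u.
  assert (E1 : T * (2 * gamma * bt) = 1) by (rewrite Hg; field; lra).
  assert (E2 : lnN / eta = 2 * bt * u * v).
  { rewrite Heta'. replace lnN with (u * u / T) by (rewrite Huu; field; lra). field. repeat split; lra. }
  assert (E3 : T * (4 * eta * bt ^ 2 * K) = 2 * bt * u * (K / v)).
  { rewrite Heta'. field. repeat split; lra. }
  assert (E4 : K / v <= v + 1).
  { apply (Rmult_le_reg_r v); [lra|]. unfold Rdiv. rewrite Rmult_assoc, Rinv_l by lra. nra. }
  assert (2 * bt * u * (K / v) <= 2 * bt * u * (v + 1)).
  { apply Rmult_le_compat_l; [nra|lra]. }
  replace (T * (2 * gamma * bt + 4 * eta * bt ^ 2 * K)) with (T * (2 * gamma * bt) + T * (4 * eta * bt ^ 2 * K)) by ring.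
  rewrite E1, E2, E3. nra.
Qed.


Theorem theorem1 (T D : nat) (h b : R) (Iset : list nat) (dem : nat -> nat) :
  (1 <= T)%nat -> (1 <= D)%nat -> 0 < h -> 0 < b ->
  NoDup Iset -> (forall i, In i Iset -> (i <= D)%nat) ->
  (2 <= length Iset)%nat ->
  (forall t, (1 <= t <= T)%nat -> (dem t <= D)%nat) ->
  2 * beta D h b * INR T > 1 ->
  let N := INR (length Iset) in
  let bt := beta D h b in
  let L := ln (2 * bt * INR T * N ^ 3 + N + 2) in
  let gamma := 1 / (2 * bt * INR T) in
  let eta := sqrt (ln N / (4 * bt ^ 2 * INR T * L)) in
  expected_regret D h b Iset dem eta gamma T
    <= 4 * bt * sqrt (INR T * ln N * L) + 2 * bt * sqrt (INR T * ln N) + 1.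
Proof.
  intros HT HD Hh Hb Hnd HID HN Hdem Hbt N bt L gamma eta.
  assert (Hne : Iset <> []) by (intros E; rewrite E in HN; simpl in HN; lia).
  assert (Hbt0 : 0 < bt) by (apply beta_pos; auto).
  fold bt in Hbt.
  assert (HT1 : 1 <= INR T) by (apply (le_INR 1); lia).
  assert (HN2 : 2 <= N) by (apply (le_INR 2); lia).
  assert (Hg : 0 < gamma < 1).
  { unfold gamma. split; [apply Rdiv_lt_0_compat; lra|].
    apply (Rmult_lt_reg_r (2 * bt * INR T)); [lra|]. unfold Rdiv. rewrite Rmult_assoc, Rinv_l; lra. }
  set (F := fun i => sumR (map (fun t => cost h b i (dem t)) (seq 1 T))).
  assert (Hbest : In (best_cost h b Iset dem T) (map F Iset)).
  { unfold best_cost. apply minR_in. destruct Iset; [congruence|discriminate]. }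
  apply in_map_iff in Hbest. destruct Hbest as [istar [Hbest Hist]].
  set (g := fun t a => cost h b a (dem t) - cost h b istar (dem t)).
  assert (Hreg : expected_regret D h b Iset dem eta gamma T =
                 Ex D h b Iset dem eta gamma (fun _ => 1) 1 T (pathg g 1)).
  { unfold expected_regret, Ex. apply sumR_ext. intros s Hs. f_equal.
    unfold regret. rewrite <- Hbest. unfold F. rewrite <- (paths_len Iset T s Hs).
    apply pathcost_eq. }
  rewrite Hreg.
  assert (HW1 : Wpos (fun _ => 1)) by (intros i; lra).
  assert (Hsq0 : 0 <= sqrt (INR T * ln N * L)) by apply sqrt_pos.
  assert (Hsq1 : 0 <= sqrt (INR T * ln N)) by apply sqrt_pos.
  destruct (Rlt_le_dec (bt * INR T) 1) as [Hsmall|Hbig].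
  -
    eapply Rle_trans.
    { apply (Ex_generic D h b Iset dem eta gamma g (fun _ => 0) bt 1 T Hne ltac:(lra)
               ltac:(intros; simpl; lra)); auto.
      intros W t HW Ht.
      rewrite (sumR_ext _ (fun a => prob_arm Iset gamma W a * g t a)) by (intros; ring).
      eapply Rle_trans.
      { apply (sumR_le _ (fun a => bt * prob_arm Iset gamma W a)). intros a Ha.
        rewrite (Rmult_comm bt). apply Rmult_le_compat_l; [apply prob_nonneg; auto; lra|].
        unfold g. assert (Hdt : (dem t <= D)%nat) by (apply Hdem; lia).
        pose proof (cost_bounds D h b a (dem t) Hh Hb (HID a Ha) Hdt).
        pose proof (cost_bounds D h b istar (dem t) Hh Hb (HID istar Hist) Hdt).
        fold bt in H, H0. lra. }
      rewrite sumR_scal, prob_sum by auto. lra. }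
    assert (0 <= 4 * bt * sqrt (INR T * ln N * L)) by (apply Rmult_le_pos; lra).
    assert (0 <= 2 * bt * sqrt (INR T * ln N)) by (apply Rmult_le_pos; lra).
    lra.
  -
    assert (Hg2 : gamma <= 1 / 2).
    { unfold gamma. apply Rmult_le_compat_l; [lra|]. apply Rinv_le_contravar; lra. }
    assert (HlnN : 0 < ln N) by (rewrite <- ln_1; apply ln_increasing; lra).
    assert (Harg : 12 <= 2 * bt * INR T * N ^ 3 + N + 2).
    { assert (1 <= 2 * bt * INR T) by lra. assert (8 <= N ^ 3) by (simpl; nra). nra. }
    assert (HL : 1 <= L).
    { unfold L. rewrite <- (ln_exp 1). apply ln_le_mono; [apply exp_pos|].
      pose proof exp_le_3. lra. }
    assert (Heta : 0 < eta).
    { unfold eta. apply sqrt_lt_R0. apply Rdiv_lt_0_compat; [lra|].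
      assert (0 < bt ^ 2) by (apply pow_lt; lra). apply Rmult_lt_0_compat; [|lra]. apply Rmult_lt_0_compat; [|lra]. apply Rmult_lt_0_compat; lra. }
    set (Phi := fun W : nat -> R => (ln (Wsum Iset W) - ln (W istar)) / eta).
    set (K := 1 - ln (gamma / Nn Iset)).
    eapply Rle_trans.
    { apply (Ex_generic D h b Iset dem eta gamma g Phi
               (2 * gamma * bt + 4 * eta * bt ^ 2 * K) 1 T Hne ltac:(lra)); auto.
      - intros W HW. unfold Phi. apply Rdiv_le_0_compat; [|lra].
        assert (W istar <= Wsum Iset W).
        { unfold Wsum. apply sumR_ge_elem; auto. intros; left; apply HW. }
        assert (ln (W istar) <= ln (Wsum Iset W)) by (apply ln_le_mono; auto).
        lra.
      - intros W t HW Ht. unfold g, Phi, K, bt.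
        apply step; auto; try lra. apply Hdem; lia. }
    assert (HPhi0 : Phi (fun _ => 1) = ln N / eta).
    { unfold Phi, Wsum. rewrite sumR_const, ln_1. fold N. f_equal. rewrite Rmult_1_r. ring. }
    rewrite HPhi0.
    apply final_alg; auto; try lra.
    unfold K. fold N. change (Nn Iset) with N.
    assert (Hprod : gamma / N * (2 * bt * INR T * N ^ 3 + N + 2) = N ^ 2 + gamma / N * (N + 2)).
    { unfold gamma. field. repeat split; lra. }
    assert (0 <= gamma / N * (N + 2)) by (apply Rmult_le_pos; [apply Rdiv_le_0_compat; lra|lra]).
    assert (Hge1 : 1 <= gamma / N * (2 * bt * INR T * N ^ 3 + N + 2)) by nra.
    assert (0 <= ln (gamma / N * (2 * bt * INR T * N ^ 3 + N + 2))).
    { rewrite <- ln_1. apply ln_le_mono; lra. }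
    rewrite ln_mult in H0 by (try apply Rdiv_lt_0_compat; lra). fold L in H0. lra.
Qed.
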